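(* Let $G$ be a graph and let $k\geq 3$ be an integer. A complex number $\lambda$ is an eigenvalue of the power hypergraph $G^{(k)}$ if and only if: (a) when $k=3$: some signed induced subgraph of $G$ has an eigenvalue $\beta$ with $\beta^2=\lambda^k$; (b) when $k\geq 4$: some signed subgraph of $G$ has an eigenvalue $\beta$ with $\beta^2=\lambda^k$.
   Context: Tensor eigenvalues: for a $k$-order $n$-dimensional complex tensor $T=(t_{i_1\cdots i_k})$ and $\mathbf{x}\in\mathbb{C}^n$, $T\mathbf{x}^{k-1}\in\mathbb{C}^n$ has $i$-th entry $\sum_{i_2,\dots,i_k=1}^n t_{i i_2\cdots i_k}x_{i_2}\cdots x_{i_k}$, and $\mathbf{x}^{[k-1]}=(x_1^{k-1},\dots,x_n^{k-1})^\top$. A number $\lambda\in\mathbb{C}$ is an eigenvalue of $T$ with eigenvector $\mathbf{x}$ if $\mathbf{x}\neq 0$ and $T\mathbf{x}^{k-1}=\lambda\mathbf{x}^{[k-1]}$. The adjacency tensor of a $k$-uniform hypergraph $H$ on $n$ vertices is the $k$-order $n$-dimensional tensor with $a_{i_1\cdots i_k}=\frac{1}{(k-1)!}$ if $\{i_1,\dots,i_k\}$ is an edge of $H$ and $0$ otherwise; eigenvalues of $H$ are the eigenvalues of its adjacency tensor. The $k$-power hypergraph $G^{(k)}$ of a graph $G$ is the $k$-uniform hypergraph obtained by adding $k-2$ new vertices to each edge of $G$ (distinct edges receive disjoint sets of new vertices); for $e\in E(G)$, $N_e$ denotes the set of new vertices added to $e$, so $e\cup N_e$ is a hyperedge. A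 signed graph $G_\pi$ is a graph $G=(V,E)$ with a sign function $\pi:E\to\{+1,-1\}$; its adjacency matrix is the symmetric matrix with $(i,j)$ entry $\pi(i,j)$ if $i\sim j$ and $0$ otherwise, and its eigenvalues are those of this matrix. A signed (induced) subgraph of $G$ is a signed graph $\widehat G_\pi$ where $\widehat G$ is an (induced) subgraph of $G$ and $\pi$ is any sign function on $E(\widehat G)$. *)

(* Defs.v *)
(* complex numbers are R[i] (mathcomp-real-closed) over a
   realType R (mathcomp-analysis reals), i.e. genuinely the complex numbers. *)
From HB Require Import structures.
From mathcomp Require Import all_boot all_order all_algebra.
From mathcomp Require Import reals complex.
Set Implicit Arguments. Unset Strict Implicit. Unset Printing Implicit Defensive.
Import Order.TTheory GRing.Theory Num.Theory.
Local Open Scope ring_scope.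

(* A k-uniform hypergraph on the finite vertex type W is given by its set of
   hyperedges hE : {set {set W}} (each of cardinality k). *)
Definition hadj (F : fieldType) (W : finType) (k : nat) (hE : {set {set W}})
    (s : seq W) : F :=
  if [set w in s] \in hE then (k.-1)`!%:R^-1 else 0.

Definition tensor_apply (F : fieldType) (W : finType) (k : nat)
    (hE : {set {set W}}) (x : W -> F) (i : W) : F :=
  \sum_(t : (k.-1).-tuple W) hadj F k hE (i :: t) * \prod_(j <- t) x j.

Definition hyper_eigenvalue (F : fieldType) (W : finType) (k : nat)
    (hE : {set {set W}}) (lambda : F) : Prop :=
  exists x : W -> F, (exists w, x w != 0) /\
    forall i : W, tensor_apply k hE x i = lambda * x i ^+ k.-1.

(* A (finite simple) graph: vertex type V, adjacency e : rel V symmetric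
   and irreflexive (hypotheses of the theorem). Edges are 2-subsets {u,v}. *)
Definition is_gedge (V : finType) (e : rel V) (A : {set V}) : bool :=
  [exists u, exists v, e u v && (A == [set u; v])].

Definition gedge (V : finType) (e : rel V) := {A : {set V} | is_gedge e A}.

(* Vertices of G^(k): old vertices plus k-2 new vertices N_f for each edge f. *)
Definition pvert (V : finType) (e : rel V) (k : nat) : finType :=
  (V + (gedge e * 'I_(k - 2)))%type.

Definition phedge (V : finType) (e : rel V) (k : nat) (f : gedge e)
    : {set pvert e k} :=
  [set inl v | v in val f] :|: [set inr (f, j) | j : 'I_(k - 2)].

Definition power_hedges (V : finType) (e : rel V) (k : nat)
    : {set {set pvert e k}} :=
  [set phedge k f | f : gedge e].

(* A signed subgraph of G with vertex set S is encoded by s : V -> V -> int: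
   s u v = 0 if uv is not an edge of the subgraph, and s u v = pi(u,v) in
   {+1,-1} if it is. *)
Definition signed_subgraph (V : finType) (e : rel V) (S : {set V})
    (s : V -> V -> int) : Prop :=
  [/\ forall u v, s u v = s v u,
      forall u v, s u v \in [:: 0%Z; 1%Z; (-1)%Z] &
      forall u v, s u v != 0 -> [/\ e u v, u \in S & v \in S]].

Definition signed_induced_subgraph (V : finType) (e : rel V) (S : {set V})
    (s : V -> V -> int) : Prop :=
  signed_subgraph e S s /\
  forall u v, u \in S -> v \in S -> e u v -> s u v != 0.

Definition signed_adj (F : fieldType) (V : finType) (S : {set V})
    (s : V -> V -> int) : 'M[F]_#|S| :=
  \matrix_(i < #|S|, j < #|S|)
     (s (enum_val i) (enum_val j))%:~R.

(* Main.v *)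
Require Import Defs.
From HB Require Import structures.
From mathcomp Require Import all_boot all_order all_algebra.
From mathcomp Require Import reals complex.
From mathcomp Require Import ring.
Import Order.TTheory GRing.Theory Num.Theory.
Local Open Scope ring_scope.
Section Graph.
Context {V : finType} {e : rel V}.
Hypothesis e_sym : symmetric e.
Hypothesis e_irr : irreflexive e.

Lemma gedge_ends (f : gedge e) :
  exists a b, [/\ e a b, a != b & val f = [set a; b]].
Proof.
case: f => A /= /existsP[a /existsP[b /andP[eab /eqP ->]]].
exists a, b; split => //.
by apply: contraTneq eab => ->; rewrite e_irr.
Qed.

Lemma set2_eq {a b u v : V} : a != b -> [set a; b] = [set u; v] ->
  (u == a) && (v == b) || (u == b) && (v == a).
Proof.
move=> ab huv.
have hu : u \in [set a; b] by rewrite huv !inE eqxx.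
have hv : v \in [set a; b] by rewrite huv !inE eqxx orbT.
have uv : u != v.
  apply/negP => /eqP uv; move: (cards2 u v); rewrite -huv cards2 ab uv eqxx.
  by [].
move: hu hv uv; rewrite !inE => /orP[]/eqP-> /orP[]/eqP->;
  rewrite ?eqxx ?andbT ?orbT //.
Qed.

Lemma set2_edge (u v : V) (f : gedge e) : val f = [set u; v] -> e u v /\ u != v.
Proof.
have [a [b [eab ab hf]]] := gedge_ends f.
move=> huv; have := set2_eq ab (etrans (esym hf) huv).
by case/orP => /andP[/eqP-> /eqP->]; split => //; [rewrite e_sym | rewrite eq_sym].
Qed.

Definition epick (u v : V) := [pick f : gedge e | val f == [set u; v]].

Lemma mk_is_gedge {u v} : e u v -> is_gedge e [set u; v].
Proof. move=> h; apply/existsP; exists u; apply/existsP; exists v; by rewrite h eqxx. Qed.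

Lemma epickP u v : e u v -> exists f, epick u v = Some f /\ val f = [set u; v].
Proof.
move=> h; rewrite /epick; case: pickP => [f /eqP hf | no]; first by exists f.
by have := no (exist (fun A => is_gedge e A) _ (mk_is_gedge h)); rewrite /= eqxx.
Qed.

Lemma epick_some u v f : epick u v = Some f -> val f = [set u; v].
Proof. by rewrite /epick; case: pickP => [g /eqP hg [<-] // | _ //]. Qed.

Lemma epick_sym u v : epick u v = epick v u.
Proof. by rewrite /epick setUC. Qed.

Lemma sum_edges (C : nmodType) (w : V) (H : gedge e -> C) :
  \sum_(f : gedge e | w \in val f) H f = \sum_u (if epick w u is Some f then H f else 0).
Proof.
have E u : (if epick w u is Some f then H f else 0) =
           \sum_(f : gedge e | val f == [set w; u]) H f.
  rewrite /epick; case: pickP => [g /eqP hg | no].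
    rewrite (big_pred1 g) // => f /=; apply/eqP/eqP => [hf|-> //].
    exact: val_inj (etrans hf (esym hg)).
  by rewrite big_pred0.
rewrite (eq_bigr _ (fun u _ => E u)).
rewrite (exchange_big_dep predT) //= big_mkcond /=; apply: eq_bigr => f _.
have [a [b [eab ab hf]]] := gedge_ends f.
change (\val f) with (sval f) in hf.
case: ifP => wf.
  have [o [wo ho]] : exists o, w != o /\ sval f = [set w; o].
    move: wf; rewrite hf !inE => /orP[]/eqP->; first by exists b.
    by exists a; split; [rewrite eq_sym | rewrite setUC].
  rewrite (big_pred1 o) // => u /=; rewrite ho; apply/eqP/eqP => [h | -> //].
  by have := set2_eq wo h; rewrite eqxx (negbTE wo) /= ?andbF ?orbF => /eqP.
rewrite big_pred0 // => u /=; apply/negbTE; apply: contraFN wf => /eqP ->.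
by rewrite !inE eqxx.
Qed.

End Graph.
Section Mat.
Context {F : fieldType} {V : finType} (S : {set V}) (s : V -> V -> int).
Hypothesis ssym : forall u v, s u v = s v u.
Hypothesis sS : forall u v, s u v != 0 -> u \in S.

Lemma eig_of_fun (z : V -> F) (beta : F) :
  (forall w, w \in S -> \sum_u (s w u)%:~R * z u = beta * z w) ->
  (exists2 u, u \in S & z u != 0) ->
  eigenvalue (signed_adj F S s) beta.
Proof.
move=> heq [u0 u0S zu0].
apply/eigenvalueP; exists (\row_i z (enum_val i)).
  apply/rowP => j; rewrite !mxE.
  under eq_bigr do rewrite !mxE.
  rewrite -(big_enum_val (A := mem S) (fun u => z u * (s u (enum_val j))%:~R)) /=.
  rewrite -heq ?enum_valP //.
  rewrite [RHS](bigID (fun u => u \in S)) /= [X in _ = _ + X]big1 ?addr0.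
    by apply: eq_bigr => u _; rewrite mulrC ssym.
  move=> u uS; have -> : s (enum_val j) u = 0; last by rewrite mul0r.
  by apply/eqP; apply: contraNT uS; rewrite ssym => /sS.
apply/eqP => /rowP /(_ (enum_rank_in u0S u0)); rewrite !mxE enum_rankK_in //.
by move/eqP; rewrite (negbTE zu0).
Qed.

Lemma fun_of_eig (beta : F) : eigenvalue (signed_adj F S s) beta ->
  exists y : V -> F, [/\ forall u, u \notin S -> y u = 0, (exists u, y u != 0) &
     forall u, \sum_w (s u w)%:~R * y w = beta * y u].
Proof.
move=> /eigenvalueP[v hv v0].
exists (fun u => \sum_(i | enum_val i == u) v 0 i); split.
- move=> u uS; rewrite big_pred0 // => i; apply/negbTE.
  by apply: contraNneq uS => <-; exact: enum_valP.
- have [i vi] : exists i, v 0 i != 0.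
    apply/existsP; apply: contraNT v0 => /existsPn h.
    by apply/eqP/rowP => i; rewrite mxE; apply/eqP/negbNE/h.
  exists (enum_val i); rewrite (big_pred1 i) // => i' /=.
  by apply/eqP/eqP => [/enum_val_inj|->].
move=> u /=; case: (boolP (u \in S)) => uS; last first.
  rewrite [in RHS]big_pred0 ?mulr0; last first.
    by move=> i; apply/negbTE; apply: contraNneq uS => <-; exact: enum_valP.
  rewrite big1 // => w _.
  have -> : s u w = 0 by apply/eqP; apply: contraNT uS => /sS.
  by rewrite mul0r.
set j := enum_rank_in uS u.
have hj : enum_val j = u by rewrite enum_rankK_in.
rewrite (big_pred1 j); last first.
  by move=> i /=; rewrite -hj; apply/eqP/eqP => [/enum_val_inj|->].
move/rowP: hv => /(_ j); rewrite !mxE => <-.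
under eq_bigr do rewrite mulr_sumr.
rewrite [RHS](partition_big (fun i => enum_val i) predT) //=.
apply: eq_bigr => w _; apply: eq_bigr => i /eqP hi.
by rewrite !mxE mulrC hj hi ssym.
Qed.
End Mat.
Section Power.
Context {V : finType} {e : rel V}.
Hypothesis e_sym : symmetric e.
Hypothesis e_irr : irreflexive e.
Variable k : nat.
Hypothesis hk : (3 <= k)%N.
Variable C : numClosedFieldType.
Local Notation W := (pvert e k).

Lemma mem_phedge_inl (u : V) (f : gedge e) : (inl u \in phedge k f) = (u \in val f).
Proof.
rewrite /phedge in_setU mem_imset; last by move=> ? ? [].
have -> : ((inl u : W) \in [set inr (f, j) | j : 'I_(k - 2)]) = false.
  by apply/negbTE/imsetP => -[j _ []].
by rewrite orbF.
Qed.

Lemma mem_phedge_inr (g : gedge e) (j : 'I_(k - 2)) (f : gedge e) : (inr (g, j) \in phedge k f) = (g == f).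
Proof.
rewrite /phedge in_setU.
have -> : ((inr (g, j) : W) \in [set inl v | v in val f]) = false.
  by apply/negbTE/imsetP => -[v _ []].
by apply/imsetP/eqP => [[j' _ [-> _]] // | ->]; exists j.
Qed.

Lemma disj_phedge (f : gedge e) : [disjoint [set (inl v : W) | v in val f] & [set (inr (f, j) : W) | j : 'I_(k - 2)]].
Proof.
rewrite -setI_eq0; apply/eqP/setP => w; rewrite in_setI in_set0.
by apply/negbTE/andP => -[/imsetP[u _ ->] /imsetP[j _ []]].
Qed.

Lemma card_phedge (f : gedge e) : #|phedge k f| = k.
Proof.
rewrite /phedge cardsU (disjoint_setI0 (disj_phedge f)) cards0 subn0.
rewrite !card_imset; last by move=> ? ? [].
  have [a [b [_ ab ->]]] := gedge_ends e_irr f.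
  by rewrite cards2 ab card_ord subnKC // ltnW.
by move=> ? ? [].
Qed.

Lemma prod_phedge (x : W -> C) (f : gedge e) : \prod_(w in phedge k f) x w =
  (\prod_(u in val f) x (inl u)) * \prod_(j : 'I_(k - 2)) x (inr (f, j)).
Proof.
rewrite /phedge (eq_bigl [predU [set inl v | v in val f] & [set inr (f, j) | j : 'I_(k - 2)]]); last by move=> w; rewrite !inE.
rewrite bigU ?disj_phedge //.
rewrite big_imset /=; last by move=> ? ? _ _ [].
rewrite big_imset /=; last by move=> ? ? _ _ [].
by [].
Qed.

Lemma phedge_inj : injective (phedge (e:=e) k).
Proof.
move=> f g h; apply: val_inj; apply/setP => u.
by rewrite -!mem_phedge_inl h.
Qed.

Lemma tensorE (x : W -> C) (i : W) :
  tensor_apply k (power_hedges e k) x i =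
  \sum_(f : gedge e | i \in phedge k f) \prod_(w in phedge k f :\ i) x w.
Proof.
rewrite /tensor_apply.
set c : C := ((k.-1)`!)%:R^-1.
have hadjE (t : (k.-1).-tuple W) : hadj C k (power_hedges e k) (i :: t) =
    \sum_(f : gedge e | [set w in i :: t] == phedge k f) c.
  rewrite /hadj /power_hedges.
  case: imsetP => [[f0 _ hf0] | nf].
    rewrite (big_pred1 f0) // => g /=; rewrite hf0.
    by apply/eqP/eqP => [/phedge_inj -> | -> ].
  rewrite big_pred0 // => g; apply/negbTE/eqP => hg; apply: nf; by exists g.

rewrite (eq_bigr (fun t : (k.-1).-tuple W => \sum_(f : gedge e | [set w in i :: t] == phedge k f)
   (c * \prod_(j <- t) x j))); last by move=> t _; rewrite hadjE mulr_suml.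
rewrite (exchange_big_dep predT) //= [RHS]big_mkcond /=; apply: eq_bigr => f _.
case: ifP => hi; last first.
  rewrite big_pred0 // => t; apply/negbTE/eqP => h; move: hi.
  by rewrite -h !inE eqxx.
set B := phedge k f :\ i.
have k0 : (0 < k)%N by apply: leq_trans hk.
have cardB : #|B| = k.-1.
  by have := cardsD1 i (phedge k f); rewrite hi card_phedge -/B add1n => hk'; rewrite [in RHS]hk'.
have key (t : (k.-1).-tuple W) :
    ([set w in i :: t] == phedge k f) = (t \in [set t : (k.-1).-tuple W | all (fun w => w \in B) t & uniq t]).
  rewrite inE; apply/eqP/andP => [h | [hall ut]].
    have u : uniq (i :: t).
      apply/card_uniqP; rewrite -cardsE h card_phedge /= size_tuple prednK //.
    move: u; rewrite cons_uniq => /andP[it ut]; split => //.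
    apply/allP => w wt; rewrite in_setD1; apply/andP; split.
      by apply/eqP => wi; move: it; rewrite -wi wt.
    by rewrite -h inE in_cons wt orbT.
  have it : i \notin t.
    by apply/negP => it; have := allP hall i it; rewrite in_setD1 eqxx.
  apply/eqP; rewrite eqEcard; apply/andP; split.
    apply/subsetP => w; rewrite inE in_cons => /orP[/eqP-> // | wt].
    by have := allP hall w wt; rewrite in_setD1 => /andP[].
  rewrite card_phedge cardsE; move: (cons_uniq i t); rewrite it ut => /card_uniqP ->.
  by rewrite /= size_tuple prednK.
rewrite (eq_bigl _ _ key).
rewrite (eq_bigr (fun _ => c * \prod_(w in B) x w)); last first.
  move=> t; rewrite inE => /andP[hall ut]; congr (_ * _).
  rewrite big_uniq //; apply: eq_bigl => w.
  have hs : [set w in t] = B.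
    apply/eqP; rewrite eqEcard; apply/andP; split.
      by apply/subsetP => w'; rewrite inE => /(allP hall).
    by rewrite cardB cardsE (card_uniqP ut) size_tuple.
  by rewrite -hs inE.
rewrite sumr_const card_uniq_tuples.
have -> : #|(fun w => w \in B)| = k.-1 by rewrite -cardB; apply: eq_card.
rewrite ffactnn -mulrnAl -mulr_natr mulVf ?mul1r //.
by rewrite pnatr_eq0 -lt0n fact_gt0.
Qed.
Lemma hyperP (lam : C) : hyper_eigenvalue k (power_hedges e k) lam <->
  exists x : W -> C, (exists w, x w != 0) /\
    forall i, \sum_(f : gedge e | i \in phedge k f) \prod_(w in phedge k f :\ i) x w
              = lam * x i ^+ k.-1.
Proof.
by split => -[x [hx h]]; exists x; split => // i; [rewrite -tensorE | rewrite tensorE].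
Qed.

Definition Pe (x : W -> C) (f : gedge e) := \prod_(w in phedge k f) x w.

Lemma Pe_D1 x f i : i \in phedge k f ->
  x i * \prod_(w in phedge k f :\ i) x w = Pe x f.
Proof. by move=> hi; rewrite /Pe (big_setD1 i hi). Qed.

Lemma prod0 {T : finType} {A : {set T}} {x : T -> C} {w} :
  w \in A -> x w = 0 -> \prod_(v in A) x v = 0.
Proof. by move=> wA xw; rewrite (big_setD1 w wA) /= xw mul0r. Qed.

Lemma Pe_neq0 x f w : Pe x f != 0 -> w \in phedge k f -> x w != 0.
Proof. by move=> h wf; apply: contraNneq h => xw; rewrite /Pe (prod0 wf xw). Qed.

Lemma sum_inr (F : gedge e -> C) g j :
  \sum_(f : gedge e | (inr (g, j) : W) \in phedge k f) F f = F g.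
Proof. by rewrite (big_pred1 g) // => f; rewrite /= mem_phedge_inr eq_sym. Qed.

Lemma sum_inl (F : gedge e -> C) u :
  \sum_(f : gedge e | (inl u : W) \in phedge k f) F f = \sum_(f : gedge e | u \in val f) F f.
Proof. by apply: eq_bigl => f; rewrite mem_phedge_inl. Qed.

Lemma prod_set2 (a b : V) (F : V -> C) : a != b ->
  \prod_(u in [set a; b]) F u = F a * F b.
Proof.
by move=> ab; rewrite big_setU1 ?big_set1 // inE.
Qed.
Lemma forward (lam : C) : hyper_eigenvalue k (power_hedges e k) lam ->
  exists (S : {set V}) (s : V -> V -> int) (beta : C),
   [/\ signed_subgraph e S s,
       ((k == 3)%N -> forall u v, u \in S -> v \in S -> e u v -> s u v != 0),
       eigenvalue (signed_adj C S s) beta & beta ^+ 2 = lam ^+ k].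
Proof.
case/hyperP => x [[w0 xw0] hx].
have k0 : (0 < k)%N by apply: leq_trans hk.
have hnew f j : Pe x f = lam * x (inr (f, j)) ^+ k.
  have := hx (inr (f, j)); rewrite sum_inr => h.
  rewrite -(Pe_D1 x f (inr (f, j))) ?mem_phedge_inr // h.
  by rewrite mulrCA -exprS prednK.
have hold u : \sum_(f : gedge e | u \in val f) Pe x f = lam * x (inl u) ^+ k.
  have := hx (inl u); rewrite sum_inl => h.
  have ek (y : C) : y ^+ k = y * y ^+ k.-1 by rewrite -exprS prednK.
  rewrite ek mulrCA -h mulr_sumr.
  by apply: eq_bigr => f uf; rewrite Pe_D1 // mem_phedge_inl.
have [u0 _] : exists u0 : V, True.
  case: w0 xw0 => [u _ | [f j] _]; first by exists u.
  by have [a [b _]] := gedge_ends e_irr f; exists a.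
case: (eqVneq lam 0) => [lam0 | lam0].
  exists [set u0], (fun _ _ => 0%Z), 0; split.
  - by split => // u v; rewrite ?inE ?eqxx.
  - by move=> _ u v; rewrite !inE => /eqP-> /eqP->; rewrite e_irr.
  - apply: (eig_of_fun _ _ _ _ (fun _ => 1)) => //.
      by move=> w _; rewrite big1 ?mul0r // => u _; rewrite mulr0z mul0r.
    by exists u0; rewrite ?inE ?oner_eq0.
  - by rewrite lam0 !expr0n /=; case: k k0.
pose z u := sqrtC (x (inl u) ^+ k).
pose mu := sqrtC (lam ^+ (k - 2)).
pose Z (f : gedge e) := \prod_(u in val f) z u.
have hZ f : Z f ^+ 2 = (\prod_(u in val f) x (inl u)) ^+ k.
  by rewrite /Z -!prodrXl; apply: eq_bigr => u _; rewrite sqrtCK.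
have ec (c : C) : \prod_(j : 'I_(k - 2)) c = c ^+ (k - 2) by rewrite prodr_const card_ord.
have hP f : Pe x f != 0 -> lam ^+ (k - 2) * Pe x f ^+ 2 = (\prod_(u in val f) x (inl u)) ^+ k.
  move=> hf.
  set X := \prod_(u in val f) x (inl u).
  set N := \prod_(j : 'I_(k - 2)) x (inr (f, j)).
  have PXN : Pe x f = X * N by rewrite /Pe prod_phedge.
  have e1 : Pe x f ^+ (k - 2) = lam ^+ (k - 2) * N ^+ k.
    rewrite -ec (eq_bigr _ (fun j _ => hnew f j)) big_split /= ec prodrXl //.
  have e2 : Pe x f ^+ k = X ^+ k * N ^+ k by rewrite PXN exprMn.
  have e3 : Pe x f ^+ k = Pe x f ^+ (k - 2) * Pe x f ^+ 2 by rewrite -exprD subnK // ltnW.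
  have : lam ^+ (k - 2) * Pe x f ^+ 2 * Pe x f ^+ (k - 2) = X ^+ k * Pe x f ^+ (k - 2).
    by rewrite -mulrA [_ ^+ 2 * _]mulrC -e3 e2 e1 mulrCA.
  by apply: mulIf; rewrite expf_neq0.
have mu0 : mu != 0 by rewrite sqrtC_eq0 expf_neq0.
have hmu : mu ^+ 2 = lam ^+ (k - 2) by rewrite sqrtCK.
have hPZ f : Pe x f != 0 -> (Pe x f * mu == Z f) || (Pe x f * mu == - Z f).
  by move=> hf; rewrite -eqf_sqr exprMn hmu mulrC hP // hZ.
pose sgn (f : gedge e) : int :=
  if Pe x f == 0 then 0 else if Pe x f * mu == Z f then 1 else -1.
have hsgn f : (sgn f)%:~R * Z f = Pe x f * mu.
  rewrite /sgn; case: eqP => [-> | /eqP hf]; first by rewrite mulr0z !mul0r.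
  case: eqP => [-> | /eqP h]; first by rewrite mulr1z mul1r.
  by have := hPZ f hf; rewrite (negbTE h) /= => /eqP ->; rewrite mulrN1z mulN1r.
pose s u v : int := if @epick _ e u v is Some f then sgn f else 0.
pose S := [set u | x (inl u) != 0].
have ssym u v : s u v = s v u by rewrite /s epick_sym.
have hsS u v : s u v != 0 -> [/\ e u v, u \in S & v \in S].
  rewrite /s; case he: (epick u v) => [f|] //; move=> hs.
  have hf := epick_some _ _ _ he.
  have [euv _] := set2_edge e_sym e_irr _ _ _ hf.
  have Pf : Pe x f != 0 by apply: contraNneq hs => h; rewrite /sgn h eqxx.
  by split => //; rewrite inE; apply: (Pe_neq0 _ _ _ Pf); rewrite mem_phedge_inl hf !inE eqxx ?orbT.
exists S, s, (lam * mu); split.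
- split => // u v; rewrite /s; case: (epick u v) => [f|] //.
  by rewrite /sgn; do 2 case: ifP => _ //.
- move=> /eqP k3 u v uS vS euv.
  have [f [he hf]] := epickP _ _ euv.
  rewrite /s he /sgn.
  have h1 : (k - 2 = 1)%N by rewrite k3.
  have j0lt : (0 < k - 2)%N by rewrite h1.
  pose j0 : 'I_(k - 2) := Ordinal j0lt.
  have Pf : Pe x f != 0.
    have := hx (inr (f, j0)); rewrite sum_inr => h.
    have hrest : \prod_(w in phedge k f :\ inr (f, j0)) x w != 0.
      apply/prodf_neq0 => w; rewrite in_setD1 => /andP[wn wf].
      case: w wn wf => [a | [g j]] wn wf.
        rewrite mem_phedge_inl hf !inE in wf.
        by case/orP: wf => /eqP ->; [move: uS | move: vS]; rewrite inE.
      move: wf; rewrite mem_phedge_inr => /eqP gf; move: wn; rewrite gf.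
      have -> : j = j0.
        apply: ord_inj => /=; have := leq_trans (ltn_ord j) (eq_leq h1).
        by rewrite ltnS leqn0 => /eqP.
      by rewrite eqxx.
    have xn0 : x (inr (f, j0)) != 0.
      apply: contraNneq hrest => h0; rewrite h h0 expr0n /= mulr_natr.
      by rewrite k3.
    by rewrite -(Pe_D1 x f (inr (f, j0))) ?mem_phedge_inr // mulf_neq0.
  by rewrite (negbTE Pf); case: ifP.
- apply: (eig_of_fun _ _ ssym _ z) => //.
  + by move=> u v /hsS[].
  + move=> w; rewrite inE => wS.
    have zw0 : z w != 0 by rewrite sqrtC_eq0 expf_neq0.
    apply: (mulfI zw0); rewrite mulr_sumr.
    have h := hold w; rewrite (sum_edges e_irr _ w) in h.
    transitivity ((\sum_u (if epick w u is Some f then Pe x f else 0)) * mu).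
      rewrite mulr_suml; apply: eq_bigr => u _.
      rewrite /s; case he: (epick w u) => [f|]; last by rewrite mulr0z !mul0r mulr0.
      have hf := epick_some _ _ _ he; have [_ wu] := set2_edge e_sym e_irr _ _ _ hf.
      by rewrite -hsgn /Z hf prod_set2 // mulrCA.
    rewrite h -(sqrtCK (x (inl w) ^+ k)) -/(z w).
    ring.
  + case: w0 xw0 => [u xu | [f j] xfj].
      by exists u; rewrite ?inE // sqrtC_eq0 expf_neq0.
    have Pf : Pe x f != 0 by rewrite (hnew f j) mulf_neq0 // expf_neq0.
    have [a [b [_ _ hf]]] := gedge_ends e_irr f.
    have xa : x (inl a) != 0.
      by apply: (Pe_neq0 _ _ _ Pf); rewrite mem_phedge_inl hf !inE eqxx.
    by exists a; rewrite ?inE // sqrtC_eq0 expf_neq0.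
- by rewrite exprMn hmu -exprD subnKC // ltnW.
Qed.
Lemma backward (lam : C) (S : {set V}) (s : V -> V -> int) (beta : C) :
  signed_subgraph e S s ->
  ((k == 3)%N -> forall u v, u \in S -> v \in S -> e u v -> s u v != 0) ->
  eigenvalue (signed_adj C S s) beta -> beta ^+ 2 = lam ^+ k ->
  hyper_eigenvalue k (power_hedges e k) lam.
Proof.
move=> [ssym sval sS] hind heig hb.
have k0 : (0 < k)%N by apply: leq_trans hk.
have km1 : (0 < k.-1)%N by rewrite -ltnS prednK // ltnW.
have j0lt : (0 < k - 2)%N by rewrite subn_gt0.
pose j0 : 'I_(k - 2) := Ordinal j0lt.
have sS1 u v : s u v != 0 -> u \in S by case/sS.
have [y [yS [u0 yu0] hy]] := fun_of_eig _ _ ssym sS1 _ heig.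
have yS' u : y u != 0 -> u \in S by apply: contraR => /yS ->.
apply/hyperP.
case: (eqVneq lam 0) => [lam0 | lam0].
  exists (fun w => if w == inl u0 then 1 else 0); split.
    by exists (inl u0); rewrite eqxx oner_eq0.
  move=> i; rewrite lam0 mul0r; apply: big1 => f hi.
  set A := phedge k f :\ i.
  have : ~~ (A \subset [set inl u0]).
    apply/negP => /subset_leq_card; rewrite cards1 => hA.
    have := cardsD1 i (phedge k f); rewrite hi card_phedge -/A => hk'.
    have : (k <= 2)%N by rewrite hk' add1n ltnS.
    by rewrite leqNgt hk.
  case/subsetPn => w wA wn.
  by apply: (prod0 wA); rewrite inE in wn; rewrite (negbTE wn).
have pk (a : C) : (a ^+ k == 0) = (a == 0) by rewrite expf_eq0 k0.
have b0 : beta != 0.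
  by apply/eqP => b0; move: (expf_neq0 k lam0); rewrite -hb b0 expr0n /= eqxx.
pose xo u := k.-root (y u ^+ 2).
have hxo u : xo u ^+ k = y u ^+ 2 by rewrite rootCK.
have xo0 u : (xo u == 0) = (y u == 0).
  by rewrite -pk hxo expf_eq0.
pose sf (f : gedge e) : int :=
  if [pick p : V * V | val f == [set p.1; p.2]] is Some p then s p.1 p.2 else 0.
have hsf f a b : val f = [set a; b] -> sf f = s a b.
  move=> hf; have [_ ab] := set2_edge e_sym e_irr _ _ _ hf.
  rewrite /sf; case: pickP => [[p1 p2] /eqP /= hp | no]; last first.
    by have := no (a, b); rewrite /= hf eqxx.
  have := set2_eq ab (etrans (esym hf) hp).
  by case/orP => /andP[/eqP-> /eqP->] //; rewrite ssym.
have sfv f : sf f \in [:: 0%Z; 1%Z; (-1)%Z].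
  by rewrite /sf; case: pickP => [p _|_] //; rewrite !inE eqxx.
pose Y (f : gedge e) := \prod_(u in val f) y u.
pose X (f : gedge e) := \prod_(u in val f) xo u.
pose act (f : gedge e) := (Y f != 0) && (sf f != 0).
pose P (f : gedge e) := lam / beta * (sf f)%:~R * Y f.
pose t (f : gedge e) := k.-root (P f / lam).
pose Q (f : gedge e) := P f / X f.
pose zeta (f : gedge e) := Q f / t f ^+ (k - 2).
pose x (w : W) := match w with
  | inl u => xo u
  | inr (f, j) => if act f then (if val j == 0%N then zeta f else 1) * t f else 0 end.
have XY f : X f ^+ k = Y f ^+ 2.
  by rewrite /X /Y -!prodrXl; apply: eq_bigr => u _; exact: hxo.
have ek2 (a : C) : a ^+ k = a ^+ (k - 2) * a ^+ 2 by rewrite -exprD subnK // ltnW.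
have hact f : act f -> [/\ t f != 0, t f ^+ k = P f / lam, zeta f ^+ k = 1
                          & Pe x f = P f].
  move=> /andP[Y0 sf0].
  have X0 : X f != 0 by rewrite -pk XY expf_neq0.
  have ss : ((sf f)%:~R : C) ^+ 2 = 1.
    by move: (sfv f) sf0; rewrite !inE => /or3P[]/eqP->; rewrite ?eqxx //= ?expr1n ?sqrrN ?expr1n.
  have P0 : P f != 0.
    by rewrite /P !mulf_neq0 // ?invr_eq0 // intr_eq0.
  have ht : t f ^+ k = P f / lam by rewrite rootCK.
  have t0 : t f != 0 by rewrite -pk ht mulf_neq0 // invr_eq0.
  have hQ2 : Q f ^+ 2 = (X f / lam) ^+ (k - 2).
    have hP2 : P f ^+ 2 = lam ^+ 2 / lam ^+ k * X f ^+ k.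
      by rewrite /P !exprMn ss XY -hb exprVn mulr1.
    rewrite /Q expr_div_n hP2 expr_div_n !ek2.
    by field; rewrite expf_neq0 // X0 lam0.
  have hz : zeta f ^+ k = 1.
    rewrite /zeta expr_div_n -exprM mulnC exprM ht.
    have -> : Q f ^+ k = (P f / lam) ^+ (k - 2).
      by rewrite ek2 hQ2 -exprMn /Q mulrA divfK.
    by rewrite divff // expf_neq0 // mulf_neq0 // invr_eq0.
  split => //.
  rewrite /Pe prod_phedge.
  have -> : \prod_(u in val f) x (inl u) = X f by [].
  have -> : \prod_(j : 'I_(k - 2)) x (inr (f, j)) = Q f.
    rewrite /= (eq_bigr (fun j : 'I_(k - 2) => (if val j == 0%N then zeta f else 1) * t f)); last first.
      by move=> j _; rewrite /act Y0 sf0.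
    rewrite big_split /= prodr_const card_ord (bigD1 j0) //= big1 ?mulr1.
      by rewrite /zeta divfK // expf_neq0.
    move=> j hj; rewrite ifF //; apply/negbTE; apply: contra hj => /eqP hj0.
    by apply/eqP; apply: ord_inj.
  by rewrite /Q mulrC divfK.
have hPe f : Pe x f = P f.
  case: (boolP (act f)) => af; first by case: (hact f af).
  have -> : Pe x f = 0.
    by apply: (prod0 (w := inr (f, j0))); rewrite ?mem_phedge_inr //= (negbTE af).
  rewrite /P; move: af; rewrite /act negb_and !negbK => /orP[]/eqP->; by rewrite ?mulr0 ?mulr0z ?mul0r.
have Yends f a b : val f = [set a; b] -> Y f = y a * y b.
  move=> hf; have [_ ab] := set2_edge e_sym e_irr _ _ _ hf.
  by rewrite /Y hf prod_set2.
exists x; split.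
  by exists (inl u0); rewrite /= xo0.
case=> [u | [g j]].
  rewrite sum_inl /=.
  case: (eqVneq (y u) 0) => yu.
    have -> : xo u = 0 by apply/eqP; rewrite xo0 yu.
    rewrite expr0n (gtn_eqF km1) mulr0.
    apply: big1 => f uf.
    have naf : ~~ act f by rewrite /act /Y (prod0 uf yu) eqxx.
    apply: (prod0 (w := inr (f, j0))); first by rewrite in_setD1 mem_phedge_inr eqxx.
    by rewrite /= (negbTE naf).
  have xu0 : xo u != 0 by rewrite xo0.
  apply: (mulfI xu0); rewrite mulr_sumr.
  transitivity (\sum_(f : gedge e | u \in val f) P f).
    by apply: eq_bigr => f uf; rewrite -hPe -(Pe_D1 x f (inl u)) ?mem_phedge_inl.
  rewrite (sum_edges e_irr _ u).
  transitivity (\sum_w lam / beta * y u * ((s u w)%:~R * y w)).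
    apply: eq_bigr => w _; case he: (epick u w) => [f|].
      have hf := epick_some _ _ _ he.
      rewrite /P (hsf f u w hf) (Yends f u w hf); ring.
    case: (eqVneq (s u w) 0) => [-> | hs]; first by rewrite mulr0z mul0r mulr0.
    have [euw _ _] := sS u w hs.
    by have [f [he' _]] := epickP _ _ euw; rewrite he' in he.
  rewrite -mulr_sumr hy [RHS]mulrCA -exprS prednK // hxo.
  by field.
rewrite sum_inr.
case: (boolP (act g)) => ag.
  have [t0 ht hz hpe] := hact g ag.
  set c := (if val j == 0%N then zeta g else 1).
  have hc : c ^+ k = 1 by rewrite /c; case: ifP => _; rewrite ?hz ?expr1n.
  have hxi : x (inr (g, j)) = c * t g by rewrite /= ag.
  have xik : x (inr (g, j)) ^+ k = P g / lam by rewrite hxi exprMn hc mul1r ht.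
  have xi0 : x (inr (g, j)) != 0.
    rewrite hxi mulf_neq0 // /c; case: ifP => _; rewrite ?oner_eq0 //.
    by rewrite -pk hz oner_eq0.
  apply: (mulfI xi0); rewrite (Pe_D1 x g (inr (g, j))) ?mem_phedge_inr // hpe.
  by rewrite mulrCA -exprS prednK // xik mulrCA mulfV // mulr1.
have -> : x (inr (g, j)) = 0 by rewrite /= (negbTE ag).
rewrite expr0n (gtn_eqF km1) mulr0.
have [a [b [eab ab hg]]] := gedge_ends e_irr g.
move: (ag); rewrite /act negb_and !negbK (Yends g a b hg) mulf_eq0.
case: (eqVneq (y a) 0) => ya.
  move=> _; apply: (prod0 (w := inl a)); last by apply/eqP; rewrite /= xo0 ya.
  by rewrite in_setD1 mem_phedge_inl hg !inE eqxx.
case: (eqVneq (y b) 0) => yb.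
  move=> _; apply: (prod0 (w := inl b)); last by apply/eqP; rewrite /= xo0 yb.
  by rewrite in_setD1 mem_phedge_inl hg !inE eqxx orbT.
rewrite /= => /eqP sf0.
have k3 : k != 3%N.
  apply/negP => /hind h; move: (h a b (yS' a ya) (yS' b yb) eab).
  by rewrite -(hsf g a b hg) sf0 eqxx.
have j1lt : ((if val j == 0%N then 1 else 0) < k - 2)%N.
  case: ifP => _ //; rewrite ltn_subRL addn1 ltn_neqAle eq_sym k3 //.
apply: (prod0 (w := inr (g, Ordinal j1lt))); last by rewrite /= (negbTE ag).
rewrite in_setD1 mem_phedge_inr eqxx andbT.
apply/eqP => -[/(congr1 val) /=]; case: eqP => [-> // | h /esym].
exact: h.
Qed.
End Power.

Theorem theorem1 (R : realType) (V : finType) (e : rel V)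
    (e_sym : symmetric e) (e_irr : irreflexive e)
    (k : nat) (hk : (3 <= k)%N) (lambda : R[i]) :
  hyper_eigenvalue k (power_hedges e k) lambda <->
  if k == 3%N then
    exists (S : {set V}) (s : V -> V -> int) (beta : R[i]),
      [/\ signed_induced_subgraph e S s,
          eigenvalue (signed_adj R[i] S s) beta &
          beta ^+ 2 = lambda ^+ k]
  else
    exists (S : {set V}) (s : V -> V -> int) (beta : R[i]),
      [/\ signed_subgraph e S s,
          eigenvalue (signed_adj R[i] S s) beta &
          beta ^+ 2 = lambda ^+ k].
Proof.
split.
  move=> /(forward e_sym e_irr _ hk) [S [s [beta [hs hind heig hb]]]].
  case: ifP => k3; exists S, s, beta; split => //.
  by split => //; apply: hind.
case: ifP => k3 [S [s [beta [hs heig hb]]]].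
  case: hs => hs hind.
  by apply: (backward e_sym e_irr _ hk _ _ _ _ _ hs _ heig hb) => _.
apply: (backward e_sym e_irr _ hk _ _ _ _ _ hs _ heig hb).
by rewrite k3.
Qed.
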